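(* Let $G$ be a finite group and $V$ an irreducible $\mathbb{R}G$-module of odd dimension affording $\rho\colon G\to\mathrm{GL}(V)$. Let $H\trianglelefteq G$ be a normal subgroup such that $\rho(H)\neq\{1\}$ and $\rho(H)$ is a characteristic subgroup of $\rho(G)$. If $(H,S)$ has the eigenvalue one property for some irreducible submodule $S$ of $\mathrm{Res}^G_H(V)$, then $(G,V)$ has the eigenvalue one property. In particular, if $H$ has the eigenvalue one property, then $(G,V)$ has the eigenvalue one property.
   Context: For a finite group $K$ and a finite-dimensional $\mathbb{R}K$-module $W$ affording $\sigma\colon K\to\mathrm{GL}(W)$, the pair $(K,W)$ has the eigenvalue one property if for every $m\in N_{\mathrm{GL}(W)}(\sigma(K))$ of finite order there is $k\in K$ such that $\sigma(k)m$ has eigenvalue $1$. The group $K$ has the eigenvalue one property if $(K,W)$ has it for every irreducible non-trivial $\mathbb{R}K$-module $W$ of odd dimension. *)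

(* Defs.v *)
(* Real representations are matrix representations
   (row-vector convention of mxrepresentation.v) over an arbitrary
   R : realType (a model of the real numbers). *)
From HB Require Import structures.
From mathcomp Require Import all_boot all_order all_algebra all_fingroup.
From mathcomp Require Import mxrepresentation.
From mathcomp Require Export reals.
Set Implicit Arguments.
Unset Strict Implicit.
Unset Printing Implicit Defensive.
Import GRing.Theory.
Local Open Scope ring_scope.

Section EOP.
Variables (R : realType) (gT : finGroupType).

Definition normalizes_img (K : {group gT}) n (sK : mx_representation R K n)
    (m : 'M[R]_n) : Prop :=
  m \in unitmx /\
  (forall x, x \in K -> exists2 y, y \in K & invmx m *m sK x *m m = sK y) /\
  (forall y, y \in K -> exists2 x, x \in K & invmx m *m sK x *m m = sK y).

Definition finite_order n (m : 'M[R]_n) : Prop :=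
  exists k : nat, (0 < k)%N /\ m ^+ k = 1%:M.

Definition pair_eop (K : {group gT}) n (sK : mx_representation R K n) : Prop :=
  forall m : 'M[R]_n, normalizes_img sK m -> finite_order m ->
    exists2 k, k \in K & eigenvalue (sK k *m m) 1.

Definition nontrivial_repr (K : {group gT}) n (sK : mx_representation R K n) :=
  exists2 k, k \in K & sK k != 1%:M.

Definition group_eop (K : {group gT}) : Prop :=
  forall n (sK : mx_representation R K n),
    mx_irreducible sK -> nontrivial_repr sK -> odd n -> pair_eop sK.

(* rho(H) is a characteristic subgroup of rho(G): every automorphism f of the
   group rho(G) maps rho(H) into rho(H). *)
Definition char_image (G H : {group gT}) n (rG : mx_representation R G n) :=
  forall f : 'M[R]_n -> 'M[R]_n,
    (forall x, x \in G -> exists2 y, y \in G & f (rG x) = rG y) ->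
    (forall y, y \in G -> exists2 x, x \in G & f (rG x) = rG y) ->
    (forall x y, x \in G -> y \in G -> f (rG x) = f (rG y) -> rG x = rG y) ->
    (forall x y, x \in G -> y \in G -> f (rG x *m rG y) = f (rG x) *m f (rG y)) ->
    forall h, h \in H -> exists2 h', h' \in H & f (rG h) = rG h'.

End EOP.

(* Main.v *)
Require Import Defs.
From HB Require Import structures.
From mathcomp Require Import all_boot all_order all_algebra all_fingroup.
From mathcomp Require Import mxrepresentation reals.
From mathcomp Require Import polyrcf.
From Stdlib Require Import Classical_Prop.
Set Implicit Arguments.
Unset Strict Implicit.
Unset Printing Implicit Defensive.
Import GRing.Theory.
Local Open Scope ring_scope.

Section Lin.
Variable F : rcfType.

Lemma odd_eigen k (A : 'M[F]_k) : odd k -> exists a, eigenvalue A a.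
Proof.
move=> ok; have sz : ~~ odd (size (char_poly A)) by rewrite size_char_poly /= ok.
have [a ra] := odd_poly_root sz.
by exists a; rewrite eigenvalue_root_char.
Qed.

Lemma schur_scalar (gT : finGroupType) (K : {group gT}) k
   (r : mx_representation F K k) (C : 'M_k) :
  mx_irreducible r -> odd k -> centgmx r C -> exists c, C = c%:M.
Proof.
move=> irr ok cC; have [a /eigenvalueP [v vC nz]] := odd_eigen C ok.
exists a; apply/eqP; rewrite -subr_eq0; apply/negPn/negP => nzD.
have cD : centgmx r (C - a%:M).
  apply/centgmxP => x Kx.
  by rewrite mulmxBl mulmxBr (centgmxP cC) // scalar_mxC.
have uD := mx_Schur irr cD nzD.
have : v *m (C - a%:M) = 0 by rewrite mulmxBr vC mul_mx_scalar subrr.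
move/(congr1 (mulmx^~ (invmx (C - a%:M)))); rewrite mulmxK // mul0mx => v0.
by rewrite v0 eqxx in nz.
Qed.

End Lin.

Section HomSpace.
Variables (F : rcfType) (gT : finGroupType) (K : {group gT}) (n : nat).
Variables (r : mx_representation F K n) (U : 'M[F]_n) (modU : mxmodule r U).
Local Notation d := (\rank U).
Local Notation rU := (submod_repr modU).

Definition HomS_def (W : 'M[F]_n) : 'M[F]_(d * n) :=
  (kermx (lin_mx (mulmxr (cokermx W))) :&:
   \bigcap_(h in K) kermx (lin_mx (mulmx (rU h)) - lin_mx (mulmxr (r h))))%MS.

Fact HomS_key : unit. Proof. by []. Qed.
Definition HomS := locked_with HomS_key HomS_def.

Lemma HomSP W (Fm : 'M_(d, n)) :
  reflect ((Fm <= W)%MS /\ forall h, h \in K -> rU h *m Fm = Fm *m r h)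
          (mxvec Fm <= HomS W)%MS.
Proof.
rewrite [HomS]unlock sub_capmx; apply: (iffP andP) => [[h1 /sub_bigcapmxP h2]|[h1 h2]]; split.
- move/sub_kermxP: h1; rewrite mul_vec_lin /= => /eqP.
  by rewrite mxvec_eq0 -submxE.
- move=> h Kh; move/sub_kermxP: (h2 h Kh).
  rewrite mulmxBr !mul_vec_lin /= => /eqP; rewrite subr_eq0 => /eqP.
  exact: (can_inj mxvecK).
- by apply/sub_kermxP; rewrite mul_vec_lin /=; apply/eqP; rewrite mxvec_eq0 -submxE.
- apply/sub_bigcapmxP => h Kh; apply/sub_kermxP.
  by rewrite mulmxBr !mul_vec_lin /= h2 // subrr.
Qed.


Lemma sub_vec m p (A : 'M[F]_(m, d * n)) (B : 'M[F]_(p, d * n)) :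
  (forall Fm : 'M[F]_(d, n), (mxvec Fm <= A)%MS -> (mxvec Fm <= B)%MS) -> (A <= B)%MS.
Proof.
move=> HAB; apply/row_subP => i; rewrite -[row i A]vec_mxK; apply: HAB.
by rewrite vec_mxK row_sub.
Qed.

Lemma HomS_mono W1 W2 : (W1 <= W2)%MS -> (HomS W1 <= HomS W2)%MS.
Proof.
move=> s12; apply: sub_vec => Fm /HomSP[s1 h1]; apply/HomSP; split=> //.
exact: submx_trans s12.
Qed.

Lemma HomS_eqmx W1 W2 : (W1 :=: W2)%MS -> \rank (HomS W1) = \rank (HomS W2).
Proof.
move=> e; move/eqmxP: e => /andP[s12 s21].
apply/eqP; rewrite eqn_leq; apply/andP; split; apply: mxrankS; exact: HomS_mono.
Qed.

Lemma HomS0 : \rank (HomS 0) = 0%N.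
Proof.
apply/eqP; rewrite mxrank_eq0; apply/rowV0P => v; rewrite -[v]vec_mxK.
by case/HomSP; rewrite submx0 => /eqP -> _; rewrite linear0.
Qed.

Lemma HomS_add W1 W2 : mxmodule r W1 -> mxmodule r W2 -> (W1 :&: W2 = 0)%MS ->
  \rank (HomS (W1 + W2)%MS) = (\rank (HomS W1) + \rank (HomS W2))%N.
Proof.
move=> m1 m2 cap.
have cap0 : (HomS W1 :&: HomS W2 = 0)%MS.
  apply/eqP/rowV0P => v; rewrite -[v]vec_mxK sub_capmx.
  case/andP=> /HomSP[s1 _] /HomSP[s2 _].
  have : (vec_mx v <= W1 :&: W2)%MS by rewrite sub_capmx s1 s2.
  by rewrite cap submx0 => /eqP ->; rewrite linear0.
rewrite -mxrank_disjoint_sum //; apply: eqmx_rank; apply/andP; split.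
  apply: sub_vec => Fm /HomSP[sF hF].
  rewrite -(add_proj_mx cap sF) linearD /= addmx_sub_adds //.
    apply/HomSP; split; first exact: proj_mx_sub.
    move=> h Kh; rewrite mulmxA hF //.
    by apply/(hom_mxP (submx_trans sF (proj_mx_hom cap m1 m2))).
  have cap' : (W2 :&: W1 = 0)%MS by rewrite capmxC.
  have sF' : (Fm <= W2 + W1)%MS by rewrite addsmxC.
  apply/HomSP; split; first exact: proj_mx_sub.
  move=> h Kh; rewrite mulmxA hF //.
  by apply/(hom_mxP (submx_trans sF' (proj_mx_hom cap' m2 m1))).
rewrite addsmx_sub; apply/andP; split; apply: HomS_mono.
  exact: addsmxSl.
exact: addsmxSr.
Qed.

Lemma HomS_sum (I : finType) (X : {set I}) (W_ : I -> 'M_n) :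
  (forall i, i \in X -> mxmodule r (W_ i)) -> mxdirect (\sum_(i in X) W_ i)%MS ->
  \rank (HomS (\sum_(i in X) W_ i)%MS) = (\sum_(i in X) \rank (HomS (W_ i)))%N.
Proof.
elim: {X}_.+1 {-2}X (ltnSn #|X|) => // N IH X leX mods dirX.
have [->|[a Xa]] := set_0Vmem X; first by rewrite !big_set0 HomS0.
have Eb : (\sum_(j in X :\ a) W_ j = \sum_(j | (j \in X) && (j != a)) W_ j)%MS.
  by apply: eq_bigl => j; rewrite in_setD1 andbC.
have ltN : (#|X :\ a| < N)%N.
  by rewrite -ltnS (leq_trans _ leX) // (cardsD1 a X) Xa.
have mods' : forall i, i \in X :\ a -> mxmodule r (W_ i).
  by move=> i; rewrite in_setD1 => /andP[_ /mods].
have dir' : mxdirect (\sum_(i in X :\ a) W_ i)%MS.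
  apply/mxdirect_sumsP => i; rewrite in_setD1 => /andP[ia Xi]; apply/eqP.
  have e0 := mxdirect_sumsP dirX i Xi.
  rewrite -submx0; apply: submx_trans (_ : _ <= W_ i :&: \sum_(j | (j \in X) && (j != i)) W_ j)%MS _; last by rewrite e0.
  apply: capmxS => //; apply/sumsmx_subP => j /andP[]; rewrite in_setD1.
  by case/andP=> ja Xj ji; apply: (sumsmx_sup j) => //; rewrite Xj ji.
have cap : (W_ a :&: \sum_(i in X :\ a) W_ i = 0)%MS.
  by rewrite Eb; move/mxdirect_sumsP: dirX => /(_ a Xa).
have mS : mxmodule r (\sum_(i in X :\ a) W_ i)%MS by apply: sumsmx_module.
rewrite (big_setD1 a Xa) /= [in RHS](big_setD1 a Xa) /=.
rewrite (HomS_add (mods a Xa) mS cap).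
by rewrite (IH _ ltN mods' dir').
Qed.


Local Notation Kb := (row_base U).

Lemma KbJ h : h \in K -> rU h *m Kb = Kb *m r h.
Proof.
move=> Kh; have := val_submodJ modU (1%:M) Kh.
by rewrite /val_submod /= !mul1mx.
Qed.

Lemma KbK : Kb *m pinvmx Kb = 1%:M.
Proof.
apply: (row_free_inj (row_base_free U)); rewrite mul1mx mulmxKpV //.
Qed.

Lemma hom_of (Fm : 'M[F]_(d, n)) :
  (forall h, h \in K -> rU h *m Fm = Fm *m r h) ->
  (U <= dom_hom_mx r (pinvmx Kb *m Fm))%MS /\ (U *m (pinvmx Kb *m Fm) :=: Fm)%MS.
Proof.
move=> hF; have KbF : Kb *m (pinvmx Kb *m Fm) = Fm by rewrite mulmxA KbK mul1mx.
split.
  rewrite -(eq_row_base U); apply/hom_mxP => h Kh.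
  by rewrite -KbJ // -mulmxA KbF hF // KbF.
have e := eqmxMr (pinvmx Kb *m Fm) (eq_row_base U).
apply: eqmx_trans (eqmx_sym e) _.
by rewrite mulmxA KbK mul1mx.
Qed.

Lemma HomS_noniso W : mxsimple r U -> mxsimple r W -> ~ mx_iso r U W ->
  \rank (HomS W) = 0%N.
Proof.
move=> simU simW niso; apply/eqP; rewrite mxrank_eq0; apply/rowV0P => v.
rewrite -[v]vec_mxK => /HomSP [sW hF].
have [->|nz] := eqVneq (vec_mx v) 0; first by rewrite linear0.
exfalso; apply: niso; have [hd e] := hom_of hF.
apply: (mx_Schur_iso simU simW hd); first by rewrite e.
by rewrite -(eqmx_eq0 e) in nz.
Qed.

Lemma HomS_iso W : mxsimple r U -> odd d -> mx_iso r U W ->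
  \rank (HomS W) = 1%N.
Proof.
move=> simU oddU [f uf hf e].
have sKU : (Kb <= U)%MS by rewrite eq_row_base.
have eF0 : (Kb *m f :=: W)%MS.
  apply: eqmx_trans _ e; exact: eqmxMr (eq_row_base U).
have F0W : (Kb *m f <= W)%MS by rewrite eF0.
have hF0 : forall h, h \in K -> rU h *m (Kb *m f) = (Kb *m f) *m r h.
  move=> h Kh; rewrite mulmxA KbJ //.
  exact: (hom_mxP (submx_trans sKU hf)).
have F0free : row_free (Kb *m f).
  by rewrite /row_free mxrankMfree ?row_free_unit //; exact: row_base_free.
have nz : mxvec (Kb *m f) != 0.
  rewrite mxvec_eq0; apply/eqP => F00.
  move: F0free; rewrite /row_free F00 mxrank0 eq_sym mxrank_eq0.
  by case: simU => _ nzU _; rewrite (negbTE nzU).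
have -> : \rank (HomS W) = \rank (mxvec (Kb *m f)).
  apply: eqmx_rank; apply/andP; split; last by apply/HomSP; split.
  apply: sub_vec => Fm /HomSP[sFW hFm].
  have sFF0 : (Fm <= Kb *m f)%MS by rewrite eF0.
  have [C dF] : exists C, C *m (Kb *m f) = Fm.
    by exists (Fm *m pinvmx (Kb *m f)); exact: mulmxKpV sFF0.
  have cC : centgmx rU C.
    apply/centgmxP => h Kh; apply: (row_free_inj F0free).
    by rewrite -(mulmxA C) hF0 // (mulmxA C) dF -(mulmxA (rU h)) dF hFm.
  have irrU : mx_irreducible rU by apply/submod_mx_irr.
  have [c Cc] := schur_scalar irrU oddU cC.
  by rewrite -dF Cc mul_scalar_mx linearZ /= scalemx_sub.
by rewrite rank_rV nz.
Qed.


Lemma stable_simple (x : 'M[F]_n) :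
  mxsimple r U -> x \in unitmx ->
  (forall h, h \in K -> exists2 h', h' \in K & x *m r h = r h' *m x) ->
  mx_iso r U (U *m x) -> odd (\rank (HomS 1%:M)) ->
  exists U', [/\ mxsimple r U', mx_iso r U U' & (U' *m x <= U')%MS].
Proof.
move=> simU ux nx [f uf hf e] oddM.
have sKU : (Kb <= U)%MS by rewrite eq_row_base.
have sfx : (Kb *m f <= Kb *m x)%MS.
  rewrite (eqmxMr f (eq_row_base U)) e (eqmxMr x (eq_row_base U)).
  exact: submx_refl.
have [P dP] : exists P, P *m (Kb *m x) = Kb *m f.
  by exists (Kb *m f *m pinvmx (Kb *m x)); exact: mulmxKpV sfx.
have Kxfree : row_free (Kb *m x).
  by rewrite /row_free mxrankMfree ?row_free_unit //; exact: row_base_free.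
have Kffree : row_free (Kb *m f).
  by rewrite /row_free mxrankMfree ?row_free_unit //; exact: row_base_free.
have uP : P \in unitmx.
  rewrite -row_free_unit /row_free eqn_leq rank_leq_row /=.
  by have := mxrankM_maxl P (Kb *m x); rewrite dP (eqP Kffree).
have hP : forall h h', h \in K -> h' \in K -> x *m r h = r h' *m x ->
    rU h *m P = P *m rU h'.
  move=> h h' Kh Kh' xh; apply: (row_free_inj Kxfree) => /=.
  rewrite -(mulmxA (rU h)) dP (mulmxA (rU h)) KbJ //.
  rewrite (hom_mxP (submx_trans sKU hf)) // -dP.
  rewrite -!(mulmxA P) -(mulmxA Kb) xh (mulmxA Kb) -KbJ //.
  by rewrite [in RHS](mulmxA (rU h')).
pose Tm := lin_mx (mulmx P) *m lin_mx (mulmxr x).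
have TmE : forall Fm : 'M[F]_(d, n), mxvec Fm *m Tm = mxvec (P *m Fm *m x).
  by move=> Fm; rewrite /Tm mulmxA !mul_vec_lin.
pose M := HomS 1%:M.
have stM : forall Fm : 'M[F]_(d, n), (mxvec Fm <= M)%MS -> (mxvec Fm *m Tm <= M)%MS.
  move=> Fm /HomSP[_ hF]; rewrite TmE; apply/HomSP; split; first exact: submx1.
  move=> h Kh; have [h' Kh' xh] := nx h Kh.
  by rewrite !mulmxA (hP h h') // -(mulmxA P (rU h')) hF // (mulmxA P) -!(mulmxA (P *m Fm)) xh.
have MTm : (M *m Tm <= M)%MS.
  apply/row_subP => i; rewrite row_mul -[row i M]vec_mxK; apply: stM.
  by rewrite vec_mxK row_sub.
pose Mb := row_base M.
have MbTm : (Mb *m Tm <= Mb)%MS.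
  rewrite (eqmxMr Tm (eq_row_base M)) (eq_row_base M); exact: MTm.
have [A dA] : exists A, A *m Mb = Mb *m Tm.
  by exists (Mb *m Tm *m pinvmx Mb); exact: mulmxKpV MbTm.
have [a /eigenvalueP [v vA nzv]] := odd_eigen A oddM.
pose w := v *m Mb.
have nzw : w != 0 by rewrite /w mulmx_free_eq0 // row_base_free.
have wM : (w <= M)%MS by rewrite /w (submx_trans (submxMl _ _)) // eq_row_base.
have wT : w *m Tm = a *: w by rewrite /w -mulmxA -dA mulmxA vA scalemxAl.
pose Fm := vec_mx w.
have /HomSP[_ hFm] : (mxvec Fm <= M)%MS by rewrite vec_mxK.
have PFx : P *m Fm *m x = a *: Fm.
  apply: (can_inj mxvecK); rewrite -TmE vec_mxK wT linearZ /= vec_mxK //.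
have nzF : Fm != 0 by apply: contraNneq nzw => F0; rewrite -[w]vec_mxK -/Fm F0 linear0.
have [hd eU] := hom_of hFm.
pose U' := U *m (pinvmx Kb *m Fm).
have nzU' : U' != 0 by rewrite -(eqmx_eq0 eU) in nzF.
have isoU := mx_Schur_inj_iso simU hd nzU'.
exists U'; split => //; first exact: mx_iso_simple isoU simU.
rewrite (eqmxMr x eU) eU.
have -> : Fm *m x = invmx P *m (a *: Fm) by rewrite -PFx -!mulmxA mulKmx.
exact: submx_trans (submxMl _ _) (scalemx_sub _ _).
Qed.

End HomSpace.

Lemma odd_double_sum (T : finType) (X : {set T}) (b : T -> T -> bool) :
  (forall x y, x \in X -> y \in X -> b x y = b y x) -> (forall x, x \in X -> b x x) ->
  odd (\sum_(y in X) \sum_(x in X) b y x) = odd #|X|.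
Proof.
elim: {X}_.+1 {-2}X (ltnSn #|X|) => // N IH X leX sym refl.
have [->|[a Xa]] := set_0Vmem X; first by rewrite !big_set0 cards0.
have ltN : (#|X :\ a| < N)%N.
  by rewrite -ltnS (leq_trans _ leX) // (cardsD1 a X) Xa.
have sub : forall y, y \in X :\ a -> y \in X by move=> y; rewrite in_setD1 => /andP[].
rewrite (cardsD1 a X) Xa (big_setD1 a Xa) /= (big_setD1 a Xa) /= refl //.
have -> : (\sum_(i in X :\ a) \sum_(x in X) b i x =
    \sum_(i in X :\ a) (b i a + \sum_(x in X :\ a) b i x))%N.
  by apply: eq_bigr => y _; rewrite (big_setD1 a Xa).
rewrite big_split /=.
have -> : (\sum_(i in X :\ a) b i a = \sum_(x in X :\ a) b a x)%N.
  by apply: eq_bigr => y Xy; rewrite sym // sub.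
rewrite !add0n addnA addnn oddD odd_double /= IH //.
- by move=> x y Xx Xy; rewrite sym // sub.
- by move=> x Xx; rewrite refl // sub.
Qed.

Section MxLemmas.
Variable F : fieldType.

Lemma conj_unit k (u A B : 'M[F]_k) : u \in unitmx ->
  (invmx u *m A *m u = B) <-> (A *m u = u *m B).
Proof.
move=> uu; split => [<- | e]; first by rewrite -(mulmxA (invmx u)) mulKVmx.
by rewrite -mulmxA e mulKmx.
Qed.

Lemma conj_exp k (B M : 'M[F]_k) j : B \in unitmx ->
  (B *m M *m invmx B) ^+ j = B *m M ^+ j *m invmx B.
Proof.
move=> uB; elim: j => [|j IH]; first by rewrite !expr0 -idmxE mulmx1 mulmxV.
by rewrite !exprSr -!mulmxE IH !mulmxA mulmxKV.
Qed.

Lemma eig_conj k (B M : 'M[F]_k) a : B \in unitmx ->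
  eigenvalue (B *m M *m invmx B) a -> eigenvalue M a.
Proof.
move=> uB /eigenvalueP [v vM nz]; apply/eigenvalueP; exists (v *m B).
  have := congr1 (mulmx^~ B) vM; rewrite !mulmxA mulmxKV // => ->.
  by rewrite scalemxAl.
by rewrite mulmx_free_eq0 // row_free_unit.
Qed.

End MxLemmas.

Section EopLemmas.
Variables (R : realType) (gT : finGroupType) (K : {group gT}).

Lemma eop_rsim n1 n2 (r1 : mx_representation R K n1) (r2 : mx_representation R K n2) :
  mx_rsim r1 r2 -> pair_eop r1 -> pair_eop r2.
Proof.
case=> B def_n1; rewrite def_n1 in r1 B * => fB hB eop1 m2 [um2 [N1 N2]] [k [k0 mk]].
have uB : B \in unitmx by rewrite -row_free_unit.
have r1E : forall a, a \in K -> r1 a = B *m r2 a *m invmx B.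
  by move=> a Ka; rewrite -hB // mulmxK.
pose m1 := B *m m2 *m invmx B.
have key : forall a b, a \in K -> b \in K ->
    r2 a *m m2 = m2 *m r2 b -> r1 a *m m1 = m1 *m r1 b.
  move=> a b Ka Kb e; rewrite /m1 !r1E // !mulmxA !mulmxKV //.
  by rewrite -(mulmxA B (r2 a)) e !mulmxA.
have um1 : m1 \in unitmx by rewrite /m1 !unitmx_mul um2 uB unitmx_inv uB.
have nm1 : normalizes_img r1 m1.
  split=> //; split.
    move=> a Ka; have [b Kb /(conj_unit _ _ um2) e] := N1 a Ka.
    by exists b => //; apply/(conj_unit _ _ um1); apply: key.
  move=> b Kb; have [a Ka /(conj_unit _ _ um2) e] := N2 b Kb.
  by exists a => //; apply/(conj_unit _ _ um1); apply: key.
have fm1 : finite_order m1.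
  by exists k; split=> //; rewrite /m1 conj_exp // mk mulmx1 mulmxV.
have [kk Kk eig] := eop1 m1 nm1 fm1.
exists kk => //; apply: (eig_conj uB).
by have -> : B *m (r2 kk *m m2) *m invmx B = r1 kk *m m1 by rewrite r1E // /m1 !mulmxA mulmxKV.
Qed.

Lemma eop_stable n (r : mx_representation R K n) (U : 'M[R]_n)
    (modU : mxmodule r U) (x : 'M[R]_n) :
  x \in unitmx -> (U *m x <= U)%MS ->
  (forall h, h \in K -> exists2 h', h' \in K & x *m r h = r h' *m x) ->
  (forall h, h \in K -> exists2 h', h' \in K & r h *m x = x *m r h') ->
  finite_order x -> pair_eop (submod_repr modU) ->
  exists2 h, h \in K & eigenvalue (r h *m x) 1.
Proof.
move=> ux sUx N1 N2 [k [k0 xk]] eop.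
pose A := in_submod U (val_submod (1%:M : 'M_(\rank U)) *m x).
have valA : forall m (w : 'M_(m, \rank U)),
    val_submod (w *m A) = val_submod w *m x.
  move=> m w; have -> : w *m A = in_submod U (val_submod w *m x).
    by rewrite /A /in_submod /val_submod /= !mulmxA mulmx1.
  rewrite in_submodK //; apply: submx_trans sUx; apply: submxMr.
  exact: val_submodP.
have valJ : forall m (w : 'M_(m, \rank U)) h, h \in K ->
    val_submod (w *m submod_repr modU h) = val_submod w *m r h.
  by move=> m w h Kh; rewrite (val_submodJ modU).
have uA : A \in unitmx.
  rewrite -row_free_unit /row_free -(mxrankMfree _ (row_base_free U)).
  have := valA _ 1%:M; rewrite mul1mx /val_submod /= => ->.
  by rewrite mxrankMfree ?row_free_unit // mul1mx; apply: row_base_free.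
have key : forall a b, a \in K -> b \in K -> r a *m x = x *m r b ->
    submod_repr modU a *m A = A *m submod_repr modU b.
  move=> a b Ka Kb e; apply: val_submod_inj.
  have vA1 : val_submod A = val_submod (1%:M : 'M_(\rank U)) *m x.
    by have := valA _ 1%:M; rewrite mul1mx.
  have vJ1 : forall h, h \in K ->
      val_submod (submod_repr modU h) = val_submod (1%:M : 'M_(\rank U)) *m r h.
    by move=> h Kh; have := valJ _ 1%:M h Kh; rewrite mul1mx.
  rewrite valA vJ1 // valJ // vA1.
  by rewrite -!(mulmxA (val_submod (1%:M : 'M_(\rank U)))) e.
have nA : normalizes_img (submod_repr modU) A.
  split=> //; split.
    move=> a Ka; have [b Kb e] := N2 a Ka.
    by exists b => //; apply/(conj_unit _ _ uA); apply: key.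
  move=> b Kb; have [a Ka e] := N1 b Kb.
  by exists a => //; apply/(conj_unit _ _ uA); apply: key.
have fA : finite_order A.
  exists k; split=> //; apply: val_submod_inj.
  have : forall j, val_submod (A ^+ j) = val_submod (1%:M : 'M_(\rank U)) *m x ^+ j.
    elim=> [|j IH]; first by rewrite !expr0 -!idmxE mulmx1.
    by rewrite !exprSr -!mulmxE valA IH mulmxA.
  by move=> ->; rewrite xk mulmx1.
have [h Kh /eigenvalueP [v vA nzv]] := eop A nA fA.
exists h => //; apply/eigenvalueP; exists (val_submod v).
  by rewrite mulmxA -valJ // -valA -mulmxA vA linearZ.
by rewrite val_submod_eq0.
Qed.

End EopLemmas.

Section Main.
Variables (R : realType) (gT : finGroupType) (G H : {group gT}) (n : nat).
Variables (rG : mx_representation R G n) (nHG : (H <| G)%g).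
Local Notation rH := (subg_repr rG (normal_sub nHG)).

Let memH h : h \in H -> h \in G.
Proof. exact: (subsetP (normal_sub nHG)). Qed.

Lemma reprX c k : c \in G -> rG (c ^+ k)%g = rG c ^+ k.
Proof.
move=> Gc; elim: k => [|k IH]; first by rewrite expg0 repr_mx1 expr0 idmxE.
by rewrite expgSr repr_mxM ?groupX // IH exprSr mulmxE.
Qed.

Lemma full_eq1 (A : 'M[R]_n) : \rank A = n -> (A :=: 1%:M)%MS.
Proof. by move=> rA; apply/eqmxP; rewrite submx1 sub1mx /row_full rA eqxx. Qed.

Lemma norm_GH m : normalizes_img rG m -> char_image H rG ->
  [/\ forall b, b \in G -> exists2 a, a \in G & m *m rG b = rG a *m m,
      forall a, a \in G -> exists2 b, b \in G & rG a *m m = m *m rG b,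
      forall h, h \in H -> exists2 h', h' \in H & m *m rG h = rG h' *m m &
      forall h, h \in H -> exists2 h', h' \in H & rG h *m m = m *m rG h'].
Proof.
case=> um [N1 N2] ch.
have mG2 : forall a, a \in G -> exists2 b, b \in G & rG a *m m = m *m rG b.
  by move=> a Ga; have [b Gb /(conj_unit _ _ um) e] := N1 a Ga; exists b.
have mG1 : forall b, b \in G -> exists2 a, a \in G & m *m rG b = rG a *m m.
  by move=> b Gb; have [a Ga /(conj_unit _ _ um) e] := N2 b Gb; exists a.
split => //.
  pose f := fun M : 'M[R]_n => m *m M *m invmx m.
  have hyp1 : forall x, x \in G -> exists2 y, y \in G & f (rG x) = rG y.
    by move=> x Gx; have [a Ga e] := mG1 x Gx; exists a => //; rewrite /f e mulmxK.
  have hyp2 : forall y, y \in G -> exists2 x, x \in G & f (rG x) = rG y.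
    by move=> y Gy; have [b Gb e] := mG2 y Gy; exists b => //; rewrite /f -e mulmxK.
  have hyp3 : forall x y, x \in G -> y \in G -> f (rG x) = f (rG y) -> rG x = rG y.
    move=> x y _ _ e; have := congr1 (fun M => invmx m *m M *m m) e.
    by rewrite /f /= !mulmxA mulVmx // !mul1mx !mulmxKV.
  have hyp4 : forall x y, x \in G -> y \in G ->
      f (rG x *m rG y) = f (rG x) *m f (rG y).
    by move=> x y _ _; rewrite /f !mulmxA mulmxKV.
  move=> h Hh; have [h' Hh' e] := ch f hyp1 hyp2 hyp3 hyp4 h Hh; exists h' => //.
  by rewrite -e /f mulmxKV.
pose f := fun M : 'M[R]_n => invmx m *m M *m m.
have hyp1 : forall x, x \in G -> exists2 y, y \in G & f (rG x) = rG y by [].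
have hyp2 : forall y, y \in G -> exists2 x, x \in G & f (rG x) = rG y by [].
have hyp3 : forall x y, x \in G -> y \in G -> f (rG x) = f (rG y) -> rG x = rG y.
  move=> x y _ _ e; have := congr1 (fun M => m *m M *m invmx m) e.
  by rewrite /f /= !mulmxA mulmxV // !mul1mx !mulmxK.
have hyp4 : forall x y, x \in G -> y \in G ->
    f (rG x *m rG y) = f (rG x) *m f (rG y).
  by move=> x y _ _; rewrite /f !mulmxA mulmxK.
move=> h Hh; have [h' Hh' e] := ch f hyp1 hyp2 hyp3 hyp4 h Hh; exists h' => //.
by apply/(conj_unit _ _ um).
Qed.

Lemma xnorm m g :
  (forall h, h \in H -> exists2 h', h' \in H & m *m rG h = rG h' *m m) ->
  (forall h, h \in H -> exists2 h', h' \in H & rG h *m m = m *m rG h') ->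
  g \in G ->
  (forall h, h \in H -> exists2 h', h' \in H & (m *m rG g) *m rG h = rG h' *m (m *m rG g)) /\
  (forall h, h \in H -> exists2 h', h' \in H & rG h *m (m *m rG g) = (m *m rG g) *m rG h').
Proof.
move=> mH1 mH2 Gg; have nG : forall y, y \in G -> (y \in 'N(H))%g by apply/subsetP; exact: normal_norm.
split.
  move=> h Hh; have Hc : (h ^ g^-1)%g \in H by rewrite memJ_norm // nG ?groupV.
  have [h' Hh' e] := mH1 _ Hc; exists h' => //.
  have eg : (rG g *m rG h = rG (h ^ g^-1)%g *m rG g).
    have Gh := memH Hh; have Gc := memH Hc.
    by rewrite -!repr_mxM // conjgE invgK mulgA mulgKV.
  by rewrite -mulmxA eg mulmxA e -mulmxA.
move=> h Hh; have [h' Hh' e] := mH2 _ Hh; exists (h' ^ g)%g.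
  by rewrite memJ_norm // nG.
have Gh' := memH Hh'; have Gc : (h' ^ g)%g \in G by rewrite memH // memJ_norm // nG.
rewrite mulmxA e -!mulmxA -!repr_mxM //.
by rewrite conjgE mulKVg.
Qed.

Lemma xfin m g :
  (forall a, a \in G -> exists2 b, b \in G & rG a *m m = m *m rG b) ->
  finite_order m -> g \in G -> finite_order (m *m rG g).
Proof.
move=> mG2 [a [a0 ma]] Gg.
have step : forall j, exists2 c, c \in G & (m *m rG g) ^+ j = m ^+ j *m rG c.
  elim=> [|j [c Gc IH]]; first by exists 1%g; rewrite ?group1 // !expr0 repr_mx1 mulmx1.
  have [b Gb e] := mG2 c Gc; exists (b * g)%g; first by rewrite groupM.
  rewrite exprSr -mulmxE IH exprSr -mulmxE repr_mxM //.
  by rewrite -!mulmxA (mulmxA (rG c)) e !mulmxA.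
have [c Gc e] := step a; exists (a * #[c]%g)%N; split; first by rewrite muln_gt0 a0 order_gt0.
by rewrite exprM e ma mul1mx -reprX // expg_order repr_mx1.
Qed.

Lemma simple_mul U m : mxsimple rH U -> m \in unitmx ->
  (forall h, h \in H -> exists2 h', h' \in H & m *m rG h = rG h' *m m) ->
  (forall h, h \in H -> exists2 h', h' \in H & rG h *m m = m *m rG h') ->
  mxsimple rH (U *m m).
Proof.
move=> [modU nzU simU] um mH1 mH2; split.
- apply/mxmoduleP => h Hh; have [h' Hh' e] := mH1 h Hh.
  rewrite -mulmxA e mulmxA submxMr //; exact: (mxmoduleP modU).
- by rewrite mulmx_free_eq0 // row_free_unit.
move=> V modV sV nzV.
have sVU : (V *m invmx m <= U)%MS.
  by rewrite -[U](mulmxK um) submxMr.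
have modV' : mxmodule rH (V *m invmx m).
  apply/mxmoduleP => h Hh; have [h' Hh' e] := mH2 h Hh.
  have e' : invmx m *m rG h = rG h' *m invmx m.
    rewrite -[LHS](mulmxK um) -(mulmxA (invmx m)) e (mulmxA (invmx m)).
    by rewrite mulVmx // mul1mx.
  rewrite -mulmxA e' mulmxA submxMr //; exact: (mxmoduleP modV).
have nzV' : V *m invmx m != 0 by rewrite mulmx_free_eq0 // row_free_unit unitmx_inv.
have := simU _ modV' sVU nzV'; move/(submxMr m); rewrite mulmxKV //.
Qed.

Lemma clif S (modS : mxmodule rH S) (simS : mxsimple rH S) : mx_irreducible rG -> odd n ->
  exists X : {set gT}, [/\ X \subset G, (\sum_(x in X) S *m rG x :=: 1%:M)%MS,
    odd (\rank S) & odd (\rank (HomS modS 1%:M))].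
Proof.
move=> irrG oddn; have [X sXG [eqV dirV]] := Clifford_basis irrG simS.
have GX : forall x, x \in X -> x \in G := subsetP sXG.
have rkx : forall x, x \in G -> \rank (S *m rG x) = \rank S.
  by move=> x Gx; rewrite mxrankMfree // row_free_unit repr_mx_unit.
have nX : n = (#|X| * \rank S)%N.
  have rkV : \rank (\sum_(x in X) S *m rG x)%MS = n by rewrite eqV mxrank1.
  move/mxdirectP: dirV => /= rk; apply: (etrans (esym rkV)); rewrite rk.
  rewrite -sum_nat_const; apply: eq_bigr => x Xx; exact: rkx (GX x Xx).
have [oddX oddS] : odd #|X| /\ odd (\rank S) by apply/andP; rewrite -oddM -nX.
exists X; split => //.
pose b y x := mxsimple_iso rH (S *m rG y) (S *m rG x).
have simJ : forall x, x \in G -> mxsimple rH (S *m rG x).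
  by move=> x Gx; apply: Clifford_simple.
have bP : forall y x, y \in G -> reflect (mx_iso rH (S *m rG y) (S *m rG x)) (b y x).
  by move=> y x Gy; apply: mxsimple_isoP; apply: simJ.
have bsym : forall x y, x \in X -> y \in X -> b x y = b y x.
  move=> x y Xx Xy; apply/(bP _ _ (GX x Xx))/(bP _ _ (GX y Xy)); exact: mx_iso_sym.
have brefl : forall x, x \in X -> b x x.
  by move=> x Xx; apply/(bP _ _ (GX x Xx)); exact: mx_iso_refl.
have eE : forall y, y \in X ->
    \rank (HomS modS 1%:M) = (\sum_(x in X) b y x)%N.
  move=> y Xy; have Gy := GX y Xy; have Gy' : (y^-1 \in G)%g by rewrite groupV.
  pose W x := S *m rG x *m rG (y^-1)%g.
  have simW : forall x, x \in X -> mxsimple rH (W x).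
    by move=> x Xx; apply: Clifford_simple => //; apply: simJ; apply: GX.
  have rkW : \rank (\sum_(x in X) W x)%MS = n.
    have e := sumsmxMr (fun x => x \in X) (fun x => S *m rG x) (rG (y^-1)%g).
    rewrite /W -e mxrankMfree ?row_free_unit ?repr_mx_unit //.
    by rewrite eqV mxrank1.
  have eqW : (\sum_(x in X) W x :=: 1%:M)%MS by apply: full_eq1.
  rewrite -(HomS_eqmx modS eqW) HomS_sum.
  - apply: eq_bigr => x Xx; have Gx := GX x Xx.
    case: (boolP (b y x)) => [/(bP _ _ Gy) iso | /(bP _ _ Gy) niso].
      rewrite (HomS_iso modS simS oddS) //.
      have := Clifford_iso2 iso Gy'; rewrite repr_mxK //; exact.
    rewrite (HomS_noniso modS simS (simW x Xx)) // => iso'.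
    apply: niso; have := Clifford_iso2 iso' Gy; rewrite /W repr_mxKV //.
  - by move=> x Xx; apply: mxsimple_module; apply: simW.
  - apply/mxdirectP => /=; rewrite rkW; apply: (etrans nX); rewrite -sum_nat_const.
    apply: eq_bigr => x Xx; rewrite /W mxrankMfree ?row_free_unit ?repr_mx_unit //.
    by rewrite rkx // GX.
have := odd_double_sum bsym brefl.
have <- : (#|X| * \rank (HomS modS 1%:M) = \sum_(y in X) \sum_(x in X) b y x)%N.
  by rewrite -sum_nat_const; apply: eq_bigr => y Xy; exact: eE.
by rewrite oddM oddX.
Qed.

Lemma part1 S (modS : mxmodule rH S) : mx_irreducible rG -> odd n ->
  char_image H rG -> mxsimple rH S -> pair_eop (submod_repr modS) -> pair_eop rG.
Proof.
move=> irrG oddn ch simS eopS m nm fm.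
have [mG1 mG2 mH1 mH2] := norm_GH nm ch.
have um : m \in unitmx by case: nm.
have [X [sXG eqV oddS oddM]] := clif modS simS irrG oddn.
have simSm : mxsimple rH (S *m m) by apply: simple_mul.
have sSm : (S *m m <= (\sum_(x in X) S *m rG x)%MS *m 1%:M)%MS.
  by rewrite mulmx1 eqV submx1.
have [i Xi isoi] := @hom_mxsemisimple_iso _ _ _ _ rH _ (fun x => x \in X) (S *m m)
   (fun x => S *m rG x) 1%:M simSm
   (fun x Xx _ => Clifford_simple simS (subsetP sXG x Xx)) (scalar_mx_hom _ _ _)
   sSm.
have Gi : i \in G := subsetP sXG i Xi.
have Gi' : (i^-1 \in G)%g by rewrite groupV.
pose x := m *m rG (i^-1)%g.
have isoSx : mx_iso rH S (S *m x).
  apply: mx_iso_sym; have := Clifford_iso2 isoi Gi'; rewrite repr_mxK // mulmxA.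
  exact: mx_iso_sym.
have [xH1 xH2] := xnorm mH1 mH2 Gi'.
have fx : finite_order x := xfin mG2 fm Gi'.
have ux : x \in unitmx by rewrite unitmx_mul um repr_mx_unit.
have [S' [simS' isoSS' stab]] := stable_simple simS ux xH1 isoSx (oddM).
have modS' := mxsimple_module simS'.
have eopS' : pair_eop (submod_repr modS') := eop_rsim (proj2 (mx_rsim_iso modS modS') isoSS') eopS.
have [h Hh eig] := @eop_stable R gT H n rH S' modS' x ux stab xH1 xH2 fx eopS'.
have [a Ga ea] := mG1 _ Gi'.
exists (h * a)%g; first by rewrite groupM // memH.
have Gh := memH Hh; by rewrite repr_mxM // -mulmxA -ea.
Qed.

Lemma part2 : mx_irreducible rG -> odd n -> (exists2 h, h \in H & rG h != 1%:M) ->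
  char_image H rG -> group_eop R H -> pair_eop rG.
Proof.
move=> irrG oddn [h0 Hh0 nt] ch geop.
have nz1 : (1%:M : 'M[R]_n) != 0 by case: irrG.
have := mxsimple_exists (mxmodule1 rH) nz1; move/classicP => nn.
apply: NNPP => npe; apply: nn => -[S simS _]; apply: npe.
have modS := mxsimple_module simS.
have [X [sXG eqV oddS _]] := clif modS simS irrG oddn.
apply: (part1 irrG oddn ch simS); apply: geop => //.
- by apply/submod_mx_irr.
- case: (boolP [exists k in H, submod_repr modS k != 1%:M]).
    by case/existsP => k /andP[Hk nk]; exists k.
  rewrite negb_exists => /forallP allk; exfalso; move/negP: nt; apply.
  have fixS : (S <= rfix_mx rG H)%MS.
    rewrite -(eq_row_base S); apply/rfix_mxP => k Hk.
    have := val_submodJ modS (1%:M) Hk.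
    move: (allk k); rewrite Hk /= negbK => /eqP ->.
    by rewrite /val_submod /= !mul1mx => <-.
  have modF := normal_rfix_mx_module rG nHG.
  have : (1%:M <= rfix_mx rG H)%MS.
    rewrite -eqV; apply/sumsmx_subP => x Xx.
    exact: mxmodule_trans modF (subsetP sXG x Xx) fixS.
  move/rfix_mxP => /(_ h0 Hh0); rewrite mul1mx => ->; exact: eqxx.
Qed.

End Main.

Unset Implicit Arguments.
Set Strict Implicit.
Set Printing Implicit Defensive.

Theorem corollary3p1p4 (R : realType) (gT : finGroupType) (G H : {group gT})
    (n : nat) (rG : mx_representation R G n) (nHG : (H <| G)%g) :
  mx_irreducible rG -> odd n ->
  (exists2 h, h \in H & rG h != 1%:M) ->
  char_image H rG ->
  (forall (S : 'M[R]_n)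
      (modS : mxmodule (subg_repr rG (normal_sub nHG)) S),
      mxsimple (subg_repr rG (normal_sub nHG)) S ->
      pair_eop (submod_repr modS) -> pair_eop rG) /\
  (group_eop R H -> pair_eop rG).
Proof.
move=> irrG oddn nt ch; split.
  by move=> S modS simS eopS; exact: (part1 irrG oddn ch simS eopS).
by move=> ge; exact: (part2 nHG irrG oddn nt ch ge).
Qed.
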